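(* Consider online multiclass classification with an arbitrary feedback graph and let $\kappa=\tfrac12$. For each round $t$ let $\ell_t$ be the multiclass hinge loss defined below and $a(\mathbf{W}_t,\mathbf{x}_t)=\ell^{(t)}(\mathbf{W}_t,y_t^\star)$. Then Gappletron (with any $\gamma\ge0$ and any OCO algorithm) satisfies for every $t$ $$\sum_{y\in[K]}p_t'(y)\mathbb{1}[y\ne y_t]\le\max\Big\{\frac23,\frac{K-1}{K}\Big\}\ell_t(\mathbf{W}_t)+\gamma_t.$$ Furthermore, $\ell_t$ satisfies $\|\nabla\ell_t(\mathbf{W}_t)\|_2^2\le4\|\mathbf{x}_t\|_2^2\,\ell_t(\mathbf{W}_t)$.
   Context: Setting: for $t=1,\dots,T$ an oblivious adversary fixes $\mathbf{x}_t\in\mathbb{R}^d$ and $y_t\in[K]$; the learner predicts $y_t'\in[K]$. A feedback graph is a directed graph $([K],\mathcal{E})$ where every node has an incoming edge; $\mathrm{out}(y')=\{y:(y',y)\in\mathcal{E}\}$; predicting $y_t'$ reveals $(y,\mathbb{1}[y\ne y_t])$ for $y\in\mathrm{out}(y_t')$ (a node with $K-1$ outgoing edges gets the missing edge added). $\mathcal{Q}=\{y':\mathrm{out}(y')=[K]\}$; $S$ is a minimum dominating set (every $y$ lies in $\mathrm{out}(y')$ for some $y'\in S$), $\rho=|S|$. Gappletron (inputs $\mathcal{Q}$, $S$, OCO algorithm $\mathcal{A}$ over matrices $\mathbf{W}\in\mathbb{R}^{K\times d}$ with rows $\mathbf{W}^k$, $\gamma\ge0$, gap map $a$ into $[0,1]$):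 at round $t$: $y_t^\star=\arg\max_k\langle\mathbf{W}_t^k,\mathbf{x}_t\rangle$; $\gamma_t=0$ if $y_t^\star\in\mathcal{Q}$, else $\gamma_t=\min\{\tfrac12,\gamma/\sqrt{|\{s\le t:y_s^\star\notin\mathcal{Q}\}|}\}$; $a_t=a(\mathbf{W}_t,\mathbf{x}_t)$; $\zeta_t=\mathbb{1}[\gamma_t\le a_t]$; $\mathbf{p}_t'=(1-\zeta_ta_t-(1-\zeta_t)\gamma_t)\mathbf{e}_{y_t^\star}+\zeta_ta_t\frac1K\mathbf{1}+(1-\zeta_t)\frac{\gamma_t}{\rho}\mathbf{1}_S$; predict $y_t'\sim\mathbf{p}_t'$; the importance-weighted loss $v_t\ell_t$ with $v_t=\mathbb{1}[y_t\in\mathrm{out}(y_t')]/P_t(y_t\in\mathrm{out}(y_t'))$ is fed to $\mathcal{A}$, which returns $\mathbf{W}_{t+1}$. Multiclass hinge loss: $m_t(\mathbf{W},y)=\langle\mathbf{W}^y,\mathbf{x}_t\rangle-\max_{k\ne y}\langle\mathbf{W}^k,\mathbf{x}_t\rangle$, $m_t^\star=\max_k m_t(\mathbf{W}_t,k)$ (computed at the current iterate $\mathbf{W}_t$). For $y\in[K]$ define $\ell^{(t)}(\mathbf{W},y)=0$ if $y=y_t^\star$ and $m_t^\star\ge\kappa$, and $\ell^{(t)}(\mathbf{W},y)=\max\{1-m_t(\mathbf{W},y),0\}$ otherwise; $\ell_t(\mathbf{W})=\ell^{(t)}(\mathbf{W},y_t)$. The gradient $\nabla\ell_t$ is with respect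 to $\mathbf{W}$ viewed as a vector in $\mathbb{R}^{Kd}$ (a subgradient where not differentiable), with the Euclidean norm. *)

(* Defs.v *)
From HB Require Import structures.
From mathcomp Require Import all_boot all_order all_algebra.
Set Implicit Arguments. Unset Strict Implicit. Unset Printing Implicit Defensive.
Import Order.TTheory GRing.Theory Num.Theory.
Local Open Scope ring_scope.

Section Gappletron.
Variables (R : rcfType) (K d : nat).

Definition dotk (W : 'M[R]_(K, d)) (x : 'rV[R]_d) (k : 'I_K) : R :=
  \sum_(j < d) W k j * x 0 j.

(* max_{k <> y} <W^k, x>  (the default is only used when K = 1) *)
Definition max_other (W : 'M[R]_(K, d)) (x : 'rV[R]_d) (y : 'I_K) : R :=
  \big[Num.max/dotk W x (odflt y [pick k | k != y])]_(k | k != y) dotk W x k.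

Definition margin (W : 'M[R]_(K, d)) (x : 'rV[R]_d) (y : 'I_K) : R :=
  dotk W x y - max_other W x y.

Definition mstar (Wt : 'M[R]_(K, d)) (x : 'rV[R]_d) (y0 : 'I_K) : R :=
  \big[Num.max/margin Wt x y0]_(k : 'I_K) margin Wt x k.

(* ell^{(t)}(W, y) with kappa = 1/2; Wt is the current iterate, ystar = y_t^* *)
Definition ell_t (Wt : 'M[R]_(K, d)) (x : 'rV[R]_d) (ystar : 'I_K)
  (W : 'M[R]_(K, d)) (y : 'I_K) : R :=
  if (y == ystar) && (2^-1 <= mstar Wt x ystar) then 0
  else Num.max (1 - margin W x y) 0.

(* Feedback graph: E y' y means (y', y) is an edge.
   out'(y') = out(y') with the missing edge added when |out(y')| = K-1 *)
Definition outE (E : rel 'I_K) (y' : 'I_K) : {set 'I_K} :=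
  if #|[set y | E y' y]| == K.-1 then [set: 'I_K] else [set y | E y' y].

Definition Qset (E : rel 'I_K) : {set 'I_K} := [set y' | outE E y' == [set: 'I_K]].

Definition dominating (E : rel 'I_K) (S : {set 'I_K}) : Prop :=
  forall y : 'I_K, exists2 y', y' \in S & y \in outE E y'.

Definition min_dominating (E : rel 'I_K) (S : {set 'I_K}) : Prop :=
  dominating E S /\ forall S', dominating E S' -> (#|S| <= #|S'|)%N.

(* gamma_t; n = |{s <= t : y_s^* \notin Q}| *)
Definition gamma_t (E : rel 'I_K) (gamma : R) (n : nat) (ystar : 'I_K) : R :=
  if ystar \in Qset E then 0 else Num.min 2^-1 (gamma / Num.sqrt n%:R).

Definition p_t (S : {set 'I_K}) (gt at_ : R) (ystar y : 'I_K) : R :=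
  let z := ((gt <= at_)%R : bool)%:R in
  (1 - z * at_ - (1 - z) * gt) * (y == ystar)%:R
  + z * at_ / K%:R + (1 - z) * gt / #|S|%:R * (y \in S)%:R.

Definition sqnormM (G : 'M[R]_(K, d)) : R := \sum_(i < K) \sum_(j < d) G i j ^+ 2.
Definition sqnormV (x : 'rV[R]_d) : R := \sum_(j < d) x 0 j ^+ 2.

Definition is_subgradient (f : 'M[R]_(K, d) -> R) (W G : 'M[R]_(K, d)) : Prop :=
  forall V : 'M[R]_(K, d),
    f W + \sum_(i < K) \sum_(j < d) G i j * (V i j - W i j) <= f V.

End Gappletron.

(* Main.v *)
Require Import Defs.
From HB Require Import structures.
From mathcomp Require Import all_boot all_order all_algebra.
From mathcomp Require Import ring lra.
Import Order.TTheory GRing.Theory Num.Theory.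
Local Open Scope ring_scope.

Section H.
Variables (R : rcfType) (K d : nat).
Hypothesis hK : (1 < K)%N.

Lemma other_ex (y : 'I_K) : exists k : 'I_K, k != y.
Proof.
have : (0 < #|predC1 y|)%N by rewrite cardC1 card_ord; case: K hK => [|[|]].
by case/card_gt0P => k; rewrite inE => ?; exists k.
Qed.

Lemma le_max_other (W : 'M[R]_(K, d)) x y k : k != y -> dotk W x k <= max_other W x y.
Proof. by move=> Hk; rewrite /max_other; exact: (le_bigmax_cond _ (fun k => dotk W x k) Hk). Qed.

Lemma max_other_le (W : 'M[R]_(K, d)) x y c :
  (forall k, k != y -> dotk W x k <= c) -> max_other W x y <= c.
Proof.
move=> H; rewrite /max_other; apply: bigmax_le => //.
case: pickP => /= [k Hk|H0]; first exact: H.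
by have [k Hk] := other_ex y; move: (H0 k); rewrite Hk.
Qed.

Lemma max_other_arg (W : 'M[R]_(K, d)) x y :
  exists2 j, j != y & max_other W x y <= dotk W x j.
Proof.
have [j0 Hj0] := other_ex y.
case: (@arg_maxP _ _ _ j0 (fun k => k != y) (dotk W x) Hj0) => j Hj Hmax.
by exists j => //; apply: max_other_le => k Hk; exact: Hmax.
Qed.

Lemma dotkD (W G : 'M[R]_(K, d)) x k : dotk (W + G) x k = dotk W x k + dotk G x k.
Proof. by rewrite /dotk -big_split; apply: eq_bigr => j _; rewrite mxE mulrDl. Qed.

Lemma CS (a b : 'I_d -> R) :
  (\sum_j a j * b j) ^+ 2 <= (\sum_j a j ^+ 2) * (\sum_j b j ^+ 2).
Proof.
have L : (\sum_j a j * b j) ^+ 2 = \sum_i \sum_j (a i * b i * (a j * b j)).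
  by rewrite expr2 mulr_suml; apply: eq_bigr => i _; rewrite mulr_sumr.
have Rr : (\sum_j a j ^+ 2) * (\sum_j b j ^+ 2) = \sum_i \sum_j (a i ^+ 2 * b j ^+ 2).
  by rewrite mulr_suml; apply: eq_bigr => i _; rewrite mulr_sumr.
have Rr' : (\sum_j a j ^+ 2) * (\sum_j b j ^+ 2) = \sum_i \sum_j (a j ^+ 2 * b i ^+ 2).
  by rewrite Rr exchange_big.
have E1 : \sum_i \sum_j (2 * (a i * b i * (a j * b j))) = 2 * (\sum_j a j * b j) ^+ 2.
  by rewrite L mulr_sumr; apply: eq_bigr => i _; rewrite mulr_sumr.
have E2 : \sum_i \sum_j (a i ^+ 2 * b j ^+ 2 + a j ^+ 2 * b i ^+ 2)
   = 2 * ((\sum_j a j ^+ 2) * (\sum_j b j ^+ 2)).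
  rewrite (eq_bigr (fun i => \sum_j (a i ^+ 2 * b j ^+ 2) + \sum_j (a j ^+ 2 * b i ^+ 2))); last first.
    by move=> i _; rewrite big_split.
  by rewrite big_split /= -Rr -Rr'; ring.
have H : \sum_i \sum_j (2 * (a i * b i * (a j * b j))) <=
  \sum_i \sum_j (a i ^+ 2 * b j ^+ 2 + a j ^+ 2 * b i ^+ 2).
  apply: ler_sum => i _; apply: ler_sum => j _.
  have := sqr_ge0 (a i * b j - a j * b i); nra.
rewrite E1 E2 in H; lra.
Qed.

Section Star.
Variables (Wt : 'M[R]_(K, d)) (xt : 'rV[R]_d) (ystar : 'I_K).
Hypothesis hystar : forall k, dotk Wt xt k <= dotk Wt xt ystar.

Lemma m_ge0 : 0 <= margin Wt xt ystar.
Proof. by rewrite /margin subr_ge0; apply: max_other_le => k _; exact: hystar. Qed.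

Lemma margin_other k : k != ystar -> margin Wt xt k <= - margin Wt xt ystar.
Proof.
move=> Hk; rewrite /margin.
have h1 := le_max_other Wt xt ystar k Hk.
have h2 : dotk Wt xt ystar <= max_other Wt xt k by apply: le_max_other; rewrite eq_sym.
have h3 := hystar k.
lra.
Qed.

Lemma mstar_eq : mstar Wt xt ystar = margin Wt xt ystar.
Proof.
apply: le_anti; rewrite /mstar; apply/andP; split; last exact: (le_bigmax _ _ ystar).
apply: bigmax_le => // k _; case: (eqVneq k ystar) => [->//|Hk].
have := margin_other k Hk; have := m_ge0; lra.
Qed.

End Star.

Lemma sum_ind (S : {set 'I_K}) : \sum_(y : 'I_K) ((y \in S)%:R : R) = #|S|%:R.
Proof.
rewrite -sum1_card natr_sum [RHS]big_mkcond /=; apply: eq_bigr => i _.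
by case: (i \in S).
Qed.

Lemma sum_p (S : {set 'I_K}) (g a : R) (ys yt : 'I_K) : (0 < #|S|)%N ->
  \sum_y p_t S g a ys y * (y != yt)%:R = 1 - p_t S g a ys yt.
Proof.
move=> hS.
have e1 : \sum_y p_t S g a ys y = 1.
  rewrite /p_t big_split big_split /= -mulr_sumr -mulr_sumr.
  rewrite sumr_const card_ord -mulr_sumr sum_ind.
  rewrite (bigD1 ys) //= eqxx big1 => [|y /negbTE -> //].
  have hK0 : (K%:R : R) != 0 by rewrite pnatr_eq0 -lt0n ltnW.
  have hS0 : (#|S|%:R : R) != 0 by rewrite pnatr_eq0 -lt0n.
  rewrite -[K%:R^-1 *+ K]mulr_natl mulfV // divfK //= ?mulr1n; ring.
move: e1; rewrite (bigD1 yt) //= => e1.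
rewrite (bigD1 yt) //= eqxx mulr0 add0r.
rewrite (eq_bigr (fun y => p_t S g a ys y)); first lra.
by move=> i ->; rewrite mulr1.
Qed.

End H.
Lemma part1 (R : rcfType) (K d : nat) (hK : (1 < K)%N)
  (E : rel 'I_K) (S : {set 'I_K}) (hS : min_dominating E S)
  (gamma : R) (hgamma : 0 <= gamma) (n : nat)
  (Wt : 'M[R]_(K, d)) (xt : 'rV[R]_d) (yt ystar : 'I_K)
  (hystar : forall k, dotk Wt xt k <= dotk Wt xt ystar) :
  \sum_(y : 'I_K) p_t S (gamma_t E gamma n ystar) (ell_t Wt xt ystar Wt ystar) ystar y * (y != yt)%:R
    <= Num.max (2 / 3) ((K%:R - 1) / K%:R) * (ell_t Wt xt ystar ^~ yt) Wt + gamma_t E gamma n ystar.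
Proof.
set gt := gamma_t E gamma n ystar.
set at_ := ell_t Wt xt ystar Wt ystar.
set lt := ell_t Wt xt ystar ^~ yt.
have hS0 : (0 < #|S|)%N.
  by case: hS => Hd _; have [y' Hy' _] := Hd yt; apply/card_gt0P; exists y'.
rewrite (@sum_p R K hK) //.
have [hg0 hg1] : 0 <= gt /\ gt <= 2^-1.
  rewrite /gt /gamma_t; case: ifP => _; first by split=> //; rewrite invr_ge0.
  split; last by rewrite ge_min lexx.
  rewrite le_min invr_ge0 /= (_ : (0:R) <= 2) //.
  by apply: divr_ge0 => //; apply: sqrtr_ge0.
set m := margin Wt xt ystar.
have hm0 : 0 <= m by apply: m_ge0.
have ha : at_ = if 2^-1 <= m then 0 else 1 - m.
  rewrite /at_ /ell_t eqxx /= mstar_eq //; case: ifP => // /negbT; rewrite -ltNge => hm.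
  by rewrite max_l //; lra.
have hL : if yt == ystar then lt Wt = at_ else 1 + m <= lt Wt.
  case: eqP => [e|/eqP hne]; first by rewrite /lt /at_ /= e.
  rewrite /lt /ell_t (negbTE hne) /= le_max; apply/orP; left.
  have := @margin_other R K d Wt xt ystar hystar yt hne; rewrite -/m; lra.
have hLa : 0 <= lt Wt.
  by rewrite /lt /ell_t; case: ifP => _ //; rewrite le_max lexx orbT.
set Mx := Num.max _ _.
have hM1 : 2/3 <= Mx by rewrite le_max lexx.
have hM2 : (K%:R-1)/K%:R <= Mx by rewrite le_max lexx orbT.
have hK0 : (K%:R : R) != 0 by rewrite pnatr_eq0 -lt0n ltnW.
have hk2 : (2 : R) <= K%:R by rewrite (ler_nat R 2 K).
have hkik : K%:R * K%:R^-1 = 1 :> R by rewrite mulfV.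
set ik := K%:R^-1 in hkik hM2 *.
have hM2' : 1 - ik <= Mx by move: hM2; rewrite mulrBl hkik mul1r.
have hik0 : 0 < ik by rewrite /ik invr_gt0 ltr0n ltnW.
have hik1 : ik <= 2^-1 by nra.
have P1 : (1 - ik) * lt Wt <= Mx * lt Wt by apply: ler_wpM2r.
have P2 : 2/3 * lt Wt <= Mx * lt Wt by apply: ler_wpM2r.
have hsS : 0 <= gt / #|S|%:R by apply: divr_ge0.
rewrite /p_t /=.
case: (leP gt at_) => hz; rewrite /= ?mulr1n ?mulr0n;
case: (eqVneq yt ystar) hL => [e|ne] hL; rewrite ?e ?eqxx ?(negbTE ne) /= ?mulr1n ?mulr0n;
case: (ystar \in S); case: (yt \in S); rewrite /= ?mulr1n ?mulr0n;
move: ha hz hL; case: ifP => hm -> hz hL; rewrite -/ik; try nra.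
Qed.

Lemma part2 (R : rcfType) (K d : nat) (hK : (1 < K)%N)
  (Wt : 'M[R]_(K, d)) (xt : 'rV[R]_d) (yt ystar : 'I_K)
  (hystar : forall k, dotk Wt xt k <= dotk Wt xt ystar)
  (G : 'M[R]_(K, d)) (hG : is_subgradient (ell_t Wt xt ystar ^~ yt) Wt G) :
  sqnormM G <= 4 * sqnormV xt * (ell_t Wt xt ystar ^~ yt) Wt.
Proof.
have hsub := hG (Wt + G).
have E : \sum_(i < K) \sum_(j < d) G i j * ((Wt + G) i j - Wt i j) = sqnormM G.
  by apply: eq_bigr => i _; apply: eq_bigr => j _; rewrite mxE; ring.
rewrite E /= in hsub.
have hA : 0 <= sqnormM G.
  by apply: sumr_ge0 => i _; apply: sumr_ge0 => j _; apply: sqr_ge0.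
have hX : 0 <= sqnormV xt by apply: sumr_ge0 => j _; apply: sqr_ge0.
move: hsub; rewrite /ell_t.
case hc : ((yt == ystar) && _) => hsub.
  by rewrite mulr0; lra.
set m := margin Wt xt ystar.
have hm0 : 0 <= m by apply: m_ge0.
have hv : 2^-1 <= 1 - margin Wt xt yt.
  case: (eqVneq yt ystar) hc => [e|ne] hc.
    move: hc; rewrite /= mstar_eq // => /negbT; rewrite -ltNge e -/m; lra.
  have := @margin_other R K d Wt xt ystar hystar yt ne; rewrite -/m; lra.
rewrite max_l in hsub *; last by lra.
rewrite le_max in hsub; case/orP: hsub => hsub; last by lra.
have [j hj hmax] := @max_other_arg R K d hK (Wt + G) xt yt.
have hWj := @le_max_other R K d Wt xt yt j hj.
move: hsub; rewrite /margin !dotkD => hsub.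
rewrite dotkD in hmax.
set P := dotk G xt yt in hsub *.
set Q := dotk G xt j in hmax.
have hAPQ : sqnormM G <= Q - P by rewrite /margin in hv; lra.
have csP : P ^+ 2 <= (\sum_k G yt k ^+ 2) * sqnormV xt by apply: CS.
have csQ : Q ^+ 2 <= (\sum_k G j k ^+ 2) * sqnormV xt by apply: CS.
have hu : (\sum_k G yt k ^+ 2) + (\sum_k G j k ^+ 2) <= sqnormM G.
  rewrite /sqnormM (bigD1 yt) //= (bigD1 j) //= addrA lerDl.
  by apply: sumr_ge0 => i _; apply: sumr_ge0 => k _; apply: sqr_ge0.
have hu1 : 0 <= \sum_k G yt k ^+ 2 by apply: sumr_ge0 => k _; apply: sqr_ge0.
have hu2 : 0 <= \sum_k G j k ^+ 2 by apply: sumr_ge0 => k _; apply: sqr_ge0.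
set A := sqnormM G in hA hAPQ hu *.
set X := sqnormV xt in hX csP csQ *.
have h1 : A ^+ 2 <= 2 * X * A.
  have : A ^+ 2 <= (Q - P) ^+ 2 by rewrite ler_sqr ?nnegrE //; lra.
  have := sqr_ge0 (Q + P); nra.
have h2 : A <= 2 * X.
  case: (eqVneq A 0) => [->|nz]; first by nra.
  have Ap : 0 < A by rewrite lt_def nz.
  nra.
have : 0 <= X * (1 - margin Wt xt yt - 2^-1) by apply: mulr_ge0 => //; lra.
rewrite -/(margin Wt xt yt); nra.
Qed.

Theorem lemma3 (R : rcfType) (K d : nat) (hK : (1 < K)%N)
  (E : rel 'I_K) (hE : forall y : 'I_K, exists y', E y' y)
  (S : {set 'I_K}) (hS : min_dominating E S)
  (gamma : R) (hgamma : 0 <= gamma) (n : nat)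
  (Wt : 'M[R]_(K, d)) (xt : 'rV[R]_d) (yt ystar : 'I_K)
  (hystar : forall k, dotk Wt xt k <= dotk Wt xt ystar)
  (hn : ystar \notin Qset E -> (0 < n)%N) :
  let gt := gamma_t E gamma n ystar in
  let at_ := ell_t Wt xt ystar Wt ystar in
  let lt := ell_t Wt xt ystar ^~ yt in
  \sum_(y : 'I_K) p_t S gt at_ ystar y * (y != yt)%:R
    <= Num.max (2 / 3) ((K%:R - 1) / K%:R) * lt Wt + gt
  /\ forall G : 'M[R]_(K, d), is_subgradient lt Wt G ->
       sqnormM G <= 4 * sqnormV xt * lt Wt.
Proof.
move=> gt at_ lt; split.
  exact: (@part1 R K d hK E S hS gamma hgamma n Wt xt yt ystar hystar).
move=> G hG.
exact: (@part2 R K d hK Wt xt yt ystar hystar G hG).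
Qed.
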